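(* For all real numbers $a,b$ with $-1\le a<1$ and $0<b<1$, $$\int_0^\infty\frac{\sinh(bt)}{\cosh(t)-a}\,\mathrm{d}t>-\frac{2b}{1+a}\log\Big(\frac12(1-a)\Big).$$ *)

(* Defs.v *)
From HB Require Import structures.
From mathcomp Require Import all_boot all_order all_algebra.
From mathcomp Require Import all_classical all_reals all_analysis.
Set Implicit Arguments. Unset Strict Implicit. Unset Printing Implicit Defensive.
Import Order.TTheory GRing.Theory Num.Theory.
Local Open Scope ring_scope.

Definition sinhR {R : realType} (x : R) : R := (expR x - expR (- x)) / 2.
Definition coshR {R : realType} (x : R) : R := (expR x + expR (- x)) / 2.

(* right-hand side  -(2b/(1+a)) log((1-a)/2); at a = -1 (where the formula is
   0/0) it is given its continuous extension, namely b. *)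
Definition rhsC1 {R : realType} (a b : R) : R :=
  if a == -1 then b else - (2 * b / (1 + a)) * ln ((1 - a) / 2).

(* Main.v *)
Require Import Defs.
From HB Require Import structures.
From mathcomp Require Import all_boot all_order all_algebra.
From mathcomp Require Import all_classical all_reals all_analysis.
From mathcomp Require Import measurable_realfun.
Import numFieldNormedType.Exports.
From mathcomp Require Import ring lra.
Import Order.TTheory GRing.Theory Num.Theory.
Local Open Scope classical_set_scope.
Local Open Scope ring_scope.

Section Aux.
Context {R : realType}.
Implicit Types x y t k : R.

Lemma is_derive_tr {f g : R -> R} {x df dg} :
  is_derive x 1 f df -> f =1 g -> df = dg -> is_derive x 1 g dg.
Proof. by move=> H /funext <- <-. Qed.

Lemma D_lin k x : is_derive x 1 (fun y => k * y) k.
Proof.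
apply: is_derive_tr (is_deriveZ k (is_derive_id x 1)) _ _.
  by move=> y.
by rewrite /GRing.scale /= mulr1.
Qed.

Lemma D_expM k x : is_derive x 1 (fun y => expR (k * y)) (k * expR (k * x)).
Proof.
apply: is_derive_tr (is_derive1_comp (is_derive_expR (k * x)) (D_lin k x)) _ _.
  by [].
by rewrite mulrC.
Qed.

Lemma sinhRE k y : sinhR (k * y) = 2^-1 * (expR (k * y) - expR ((- k) * y)).
Proof. by rewrite /sinhR mulNr mulrC. Qed.
Lemma coshRE k y : coshR (k * y) = 2^-1 * (expR (k * y) + expR ((- k) * y)).
Proof. by rewrite /coshR mulNr mulrC. Qed.

Lemma D_sinhM k x : is_derive x 1 (fun y => sinhR (k * y)) (k * coshR (k * x)).
Proof.
apply: is_derive_tr (is_deriveZ (2^-1) (is_deriveB (D_expM k x) (D_expM (- k) x))) _ _.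
  by move=> y; rewrite sinhRE.
rewrite coshRE /GRing.scale /=; ring.
Qed.

Lemma D_coshM k x : is_derive x 1 (fun y => coshR (k * y)) (k * sinhR (k * x)).
Proof.
apply: is_derive_tr (is_deriveZ (2^-1) (is_deriveD (D_expM k x) (D_expM (- k) x))) _ _.
  by move=> y; rewrite coshRE.
rewrite sinhRE /GRing.scale /=; ring.
Qed.

Lemma D_sinh x : is_derive x 1 sinhR (coshR x).
Proof.
by apply: is_derive_tr (D_sinhM 1 x) _ _ => [y|]; rewrite !mul1r.
Qed.
Lemma D_cosh x : is_derive x 1 coshR (sinhR x).
Proof.
by apply: is_derive_tr (D_coshM 1 x) _ _ => [y|]; rewrite !mul1r.
Qed.

Lemma derive1_of {f : R -> R} {x df} : is_derive x 1 f df -> (f^`())%classic x = df.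
Proof. by move=> H; rewrite derive1E derive_val. Qed.

Lemma mono0 {p dp : R -> R} : (forall x, is_derive x 1 p (dp x)) ->
  (forall x, 0 <= x -> 0 <= dp x) -> forall x, 0 <= x -> p 0 <= p x.
Proof.
move=> Hd Hp x x0.
apply: (@ger0_derive1_ndecry R p 0) => //.
- move=> y; rewrite in_itv/= andbT => /ltW y0.
  by rewrite (derive1_of (Hd y)) Hp.
- apply: derivable_within_continuous => y _; by case: (Hd y).
Qed.

Lemma expR_sum_ge2 x : 2 <= expR x + expR (- x).
Proof. have := expR_ge1Dx x; have := expR_ge1Dx (- x); lra. Qed.

Lemma cosh_ge1 x : 1 <= coshR x.
Proof. rewrite /coshR; have := expR_sum_ge2 x; lra. Qed.

Lemma sinh_ge_x x : 0 <= x -> x <= sinhR x.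
Proof.
move=> x0.
have hd : forall y : R, is_derive y 1 (fun y => sinhR y - y) (coshR y - 1).
  move=> y; exact: is_derive_tr (is_deriveB (D_sinh y) (is_derive_id y 1)) _ _.
have hp : forall y : R, 0 <= y -> 0 <= coshR y - 1.
  by move=> y _; rewrite subr_ge0 cosh_ge1.
have := mono0 hd hp x x0.
rewrite /= /sinhR oppr0 expR0; lra.
Qed.

Lemma cosh_ge x : 0 <= x -> 1 + x ^+ 2 / 2 <= coshR x.
Proof.
move=> x0.
have hd : forall y : R, is_derive y 1 (fun y => coshR y - 1 - y ^+ 2 / 2) (sinhR y - y).
  move=> y.
  apply: is_derive_tr (is_deriveB (is_deriveB (D_cosh y) (is_derive_cst (1:R) y 1))
      (is_deriveZ (2^-1) (is_deriveX 2 (is_derive_id y 1)))) _ _.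
    by move=> z; rewrite /GRing.scale /= mulrC.
  rewrite /GRing.scale /=; by field.
have hp : forall y : R, 0 <= y -> 0 <= sinhR y - y.
  by move=> y y0; rewrite subr_ge0 sinh_ge_x.
have := mono0 hd hp x x0.
rewrite /= /coshR oppr0 expR0; lra.
Qed.

Lemma sinh_ge3 x : 0 <= x -> x + x ^+ 3 / 6 <= sinhR x.
Proof.
move=> x0.
have hd : forall y : R, is_derive y 1 (fun y => sinhR y - y - y ^+ 3 / 6) (coshR y - 1 - y ^+ 2 / 2).
  move=> y.
  apply: is_derive_tr (is_deriveB (is_deriveB (D_sinh y) (is_derive_id y 1))
      (is_deriveZ (6^-1) (is_deriveX 3 (is_derive_id y 1)))) _ _.
    by move=> z; rewrite /GRing.scale /= mulrC.
  by rewrite /GRing.scale /=; field.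
have hp : forall y : R, 0 <= y -> 0 <= coshR y - 1 - y ^+ 2 / 2.
  by move=> y y0; have := cosh_ge y y0; lra.
have := mono0 hd hp x x0.
rewrite /= /sinhR oppr0 expR0; lra.
Qed.

Lemma tanh_half x : 0 <= x -> 2 * sinhR x <= x * (coshR x + 1).
Proof.
move=> x0.
have H2 : forall y : R, 0 <= y -> 0 <= 1 - coshR y + y * sinhR y.
  move=> y y0.
  have hd : forall z : R, is_derive z 1 (fun z => 1 - coshR z + z * sinhR z) (z * coshR z).
    move=> z.
    apply: is_derive_tr (is_deriveD (is_deriveB (is_derive_cst (1:R) z 1) (D_cosh z))
      (is_deriveM (is_derive_id z (1:R)) (D_sinh z))) _ _.
      by [].
    by rewrite /GRing.scale /=; field.
  have hp : forall z : R, 0 <= z -> 0 <= z * coshR z.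
    by move=> z z0; rewrite mulr_ge0 // (le_trans _ (cosh_ge1 z)).
  have := mono0 hd hp y y0.
  rewrite /= /coshR oppr0 expR0 mul0r; lra.
have hd : forall z : R, is_derive z 1 (fun z => z * (coshR z + 1) - 2 * sinhR z) (1 - coshR z + z * sinhR z).
  move=> z.
  apply: is_derive_tr (is_deriveB (is_deriveM (is_derive_id z (1:R))
     (is_deriveD (D_cosh z) (is_derive_cst (1:R) z 1))) (is_deriveZ 2 (D_sinh z))) _ _.
    by move=> y; rewrite /GRing.scale /=.
  have -> : (coshR + cst (1:R)) z = coshR z + 1 by [].
  by rewrite /GRing.scale /=; field.
have := mono0 hd H2 x x0.
rewrite /= /sinhR oppr0 expR0; lra.
Qed.


Definition fI (a b t : R) := sinhR (b * t) / (coshR t - a).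
Definition gI (a b t : R) := 2 * b * sinhR t / ((coshR t - a) * (coshR t + 1)).
Definition c0 (b : R) := b ^+ 3 / 6 / (expR 2 + 1).

Lemma cosh_le_exp t : 0 <= t -> coshR t <= expR t.
Proof.
move=> t0; rewrite /coshR.
have : expR (- t) <= expR t by rewrite ler_expR; lra.
lra.
Qed.

Lemma pw (a b t : R) : -1 <= a -> a < 1 -> 0 < b -> 0 <= t ->
  gI a b t + c0 b * \1_(`[1, 2]%classic) t <= fI a b t.
Proof.
move=> a1 a2 b0 t0.
have C1 := cosh_ge1 t.
set C := coshR t in C1 *; set S := sinhR t.
have D0 : 0 < C - a by lra.
have C0 : 0 < C + 1 by lra.
have h2 : 2 * b * S / (C + 1) <= b * t.
  rewrite ler_pdivrMr //.
  have := tanh_half t t0; rewrite -/C -/S => h.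
  have := ler_wpM2l (ltW b0) h; lra.
have bt0 : 0 <= b * t by rewrite mulr_ge0 // ltW.
have key : (b * t) ^+ 3 / 6 <= sinhR (b * t) - 2 * b * S / (C + 1).
  have := sinh_ge3 (b * t) bt0; lra.
have -> : fI a b t = gI a b t + (sinhR (b * t) - 2 * b * S / (C + 1)) / (C - a).
  rewrite /fI /gI -/C -/S; field.
  by apply/andP; split; apply: lt0r_neq0.
rewrite lerD2l indicE.
have X0 : 0 <= sinhR (b * t) - 2 * b * S / (C + 1).
  apply: le_trans key; rewrite divr_ge0 // exprn_ge0 //.
case: (boolP (t \in `[1, 2]%classic)) => tin; last first.
  by rewrite mulr0 divr_ge0 // ltW.
rewrite mulr1.
move: tin; rewrite inE /= in_itv /= => /andP[t1 t2].
have e1 : b ^+ 3 / 6 <= sinhR (b * t) - 2 * b * S / (C + 1).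
  apply: le_trans key; rewrite ler_pM2r ?invr_gt0 //.
  rewrite exprMn -[X in X <= _]mulr1; apply: ler_wpM2l; [by rewrite exprn_ge0 // ltW | exact: exprn_ege1].
have e2 : C - a <= expR 2 + 1.
  have := cosh_le_exp t t0; rewrite -/C.
  have : expR t <= expR 2 by rewrite ler_expR.
  lra.
rewrite /c0. apply: ler_pM.
- by rewrite divr_ge0 // exprn_ge0 // ltW.
- by rewrite invr_ge0 addr_ge0 // expR_ge0.
- exact: e1.
- by rewrite lef_pV2 // posrE // addr_gt0 // expR_gt0.
Qed.


Lemma cont_der {f : R -> R} {df : R -> R} : (forall x : R, is_derive x 1 f (df x)) -> continuous f.
Proof. move=> H x; case: (H x) => dx _; exact/differentiable_continuous/derivable1_diffP. Qed.

Lemma FTCg {g F : R -> R} {l : R} : (forall x, 0 <= x -> 0 <= g x) -> continuous g ->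
  F x @[x --> +oo] --> l -> (forall x, is_derive x 1 F (g x)) ->
  (\int[lebesgue_measure]_(x in `[0%R, +oo[) (g x)%:E = l%:E - (F 0)%:E)%E.
Proof.
move=> g0 cg Fl Fd.
apply: ge0_continuous_FTC2y => //.
- exact: continuous_subspaceT.
- apply: cvg_at_right_filter; exact: (cont_der Fd).
- by move=> x _; apply: derive1_of.
Qed.

Lemma inv_cosh0 : (coshR x + 1)^-1 @[x --> +oo] --> (0:R).
Proof.
have pos : \forall x \near +oo, 0 < coshR x + 1 :> R.
  by near=> x; have := cosh_ge1 x; lra.
apply/(gtr0_cvgV0 pos).
apply/cvgryPge => A.
near=> x.
have hx : Num.max A 0 <= x.
  by near: x; apply: nbhs_pinfty_ge; exact: num_real.
rewrite ge_max in hx; case/andP: hx => hA h0.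
have := cosh_ge x h0.
have : 0 <= (x - 1) ^+ 2 by exact: sqr_ge0.
nra.
Unshelve. all: end_near.
Qed.

Lemma cosh0 : coshR 0 = 1 :> R.
Proof. by rewrite /coshR oppr0 expR0; field. Qed.

Lemma D_lnu {u : R -> R} {x du} : 0 < u x -> is_derive x 1 u du ->
  is_derive x 1 (fun y => ln (u y)) (du / u x).
Proof.
move=> ux H; apply: is_derive_tr (is_derive1_comp (is_derive1_ln ux) H) _ _ => //.
by rewrite mulrC.
Qed.

Lemma Dca (a x : R) : is_derive x 1 (fun y => coshR y - a) (sinhR x).
Proof.
apply: is_derive_tr (is_deriveB (D_cosh x) (is_derive_cst a x 1)) _ _ => //.
by rewrite subr0.
Qed.

Lemma Dcp (x : R) : is_derive x 1 (fun y => coshR y + 1) (sinhR x).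
Proof.
apply: is_derive_tr (is_deriveD (D_cosh x) (is_derive_cst (1:R) x 1)) _ _ => //.
by rewrite addr0.
Qed.

Lemma cont_g (a b : R) : a < 1 -> continuous (gI a b).
Proof.
move=> a1 x; rewrite /gI /fI.
apply: (@continuousM _ _ (fun t => 2 * b * sinhR t) (fun t => ((coshR t - a) * (coshR t + 1))^-1)).
  apply: continuousM; first exact: cvg_cst.
  exact: (cont_der D_sinh).
apply: continuousV.
  have h := cosh_ge1 x.
  rewrite mulf_neq0 //; apply/eqP; lra.
apply: continuousM; [exact: (cont_der (Dca a)) | exact: (cont_der Dcp)].
Qed.

Lemma cont_f (a b : R) : a < 1 -> continuous (fI a b).
Proof.
move=> a1 x; rewrite /gI /fI.
apply: (@continuousM _ _ (fun t => sinhR (b * t)) (fun t => (coshR t - a)^-1)); first exact: (cont_der (D_sinhM b)).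
apply: continuousV.
  have h := cosh_ge1 x; apply/eqP; lra.
exact: (cont_der (Dca a)).
Qed.

Lemma g_ge0 (a b x : R) : a < 1 -> 0 < b -> 0 <= x -> 0 <= gI a b x.
Proof.
move=> a1 b0 x0; have h := cosh_ge1 x; have hs := sinh_ge_x x x0.
rewrite /gI divr_ge0 //.
  apply: mulr_ge0; [apply: mulr_ge0; lra | exact: le_trans hs].
rewrite mulr_ge0 //; lra.
Qed.


Lemma int_g1 (a b : R) : -1 < a -> a < 1 -> 0 < b ->
  (\int[lebesgue_measure]_(x in `[0%R, +oo[) (gI a b x)%:E =
    (- (2 * b / (1 + a)) * ln ((1 - a) / 2))%:E)%E.
Proof.
move=> a1 a2 b0.
set k := 2 * b / (1 + a).
pose F t := k * (ln (coshR t - a) - ln (coshR t + 1)).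
have n1 : 1 + a != 0 by apply/eqP; lra.
have Fd : forall x, is_derive x 1 F (gI a b x).
  move=> x.
  have h := cosh_ge1 x.
  have P1 : 0 < coshR x - a by lra.
  have P2 : 0 < coshR x + 1 by lra.
  apply: is_derive_tr (is_deriveZ k (is_deriveB (@D_lnu (fun y => coshR y - a) x _ P1 (Dca a x)) (@D_lnu (fun y => coshR y + 1) x _ P2 (Dcp x)))) _ _.
    by move=> y.
  rewrite /GRing.scale /= /gI /k; field.
  by rewrite n1 (lt0r_neq0 P1) (lt0r_neq0 P2).
have Fl : F x @[x --> +oo] --> (0:R).
  have q1 : (fun t => 1 - (1 + a) * (coshR t + 1)^-1) @ +oo --> (1:R).
    have := cvgB (cvg_cst (1:R)) (cvgMl_tmp (a := 1 + a) inv_cosh0).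
    rewrite mulr0 subr0; exact.
  have q2 : (fun t => ln (1 - (1 + a) * (coshR t + 1)^-1)) @ +oo --> (0:R).
    rewrite -ln1; exact: (continuous_cvg _ (continuous_ln ltr01) q1).
  have -> : F = fun t => k * ln (1 - (1 + a) * (coshR t + 1)^-1).
    apply/funext => t /=.
    have h := cosh_ge1 t.
    rewrite /F -ln_div ?posrE; try lra.
    congr (k * ln _); field; apply/eqP; lra.
  rewrite -(mulr0 k); exact: cvgMl_tmp.
have g0 : forall x, 0 <= x -> 0 <= gI a b x by move=> x x0; apply: g_ge0.
rewrite (FTCg g0 (cont_g a b a2) Fl Fd).
rewrite -EFinB; congr EFin.
rewrite /F cosh0 ln_div ?posrE; lra.
Qed.


Lemma int_g2 (b : R) : 0 < b ->
  (\int[lebesgue_measure]_(x in `[0%R, +oo[) (gI (-1) b x)%:E = b%:E)%E.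
Proof.
move=> b0.
set k := - (2 * b).
pose F t := k * (coshR t + 1)^-1.
have Fd : forall x, is_derive x 1 F (gI (-1) b x).
  move=> x.
  have h := cosh_ge1 x.
  have P2 : 0 < coshR x + 1 by lra.
  apply: is_derive_tr (is_deriveZ k (@is_deriveV _ (fun y => coshR y + 1) x _ _ (lt0r_neq0 P2) (Dcp x))) _ _.
    by move=> y.
  rewrite /GRing.scale /= /gI /k opprK; field.
  by rewrite (lt0r_neq0 P2).
have Fl : F x @[x --> +oo] --> (0:R).
  rewrite -(mulr0 k); exact: cvgMl_tmp inv_cosh0.
have a2 : (-1 : R) < 1 by lra.
have g0 : forall x, 0 <= x -> 0 <= gI (-1) b x by move=> x x0; apply: g_ge0.
rewrite (FTCg g0 (cont_g (-1) b a2) Fl Fd).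
rewrite -EFinB; congr EFin.
rewrite /F /k cosh0; by field.
Qed.

End Aux.

Theorem lemmaC1 (R : realType) (a b : R) :
  -1 <= a -> a < 1 -> 0 < b -> b < 1 ->
  ((rhsC1 a b)%:E <
   \int[@lebesgue_measure R]_(t in `[0%R, +oo[%classic)
      (sinhR (b * t) / (coshR t - a))%:E)%E.
Proof.
move=> a1 a2 b0 b1.
set D := `[0%R, +oo[%classic.
have mD : measurable D by exact: measurable_itv.
have Ig : (\int[lebesgue_measure]_(x in D) (gI a b x)%:E = (rhsC1 a b)%:E)%E.
  rewrite /rhsC1; case: eqP => [->|ha]; first exact: int_g2.
  apply: int_g1 => //.
  by rewrite lt_neqAle a1 andbT eq_sym; apply/eqP.
pose A : set R := `[1%R, 2%R]%classic.
have mA : measurable A by exact: measurable_itv.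
have c0pos : 0 < c0 b.
  by rewrite /c0 divr_gt0 ?divr_gt0 ?exprn_gt0 // addr_gt0 // expR_gt0.
have Ih : (\int[lebesgue_measure]_(x in D) (c0 b * \1_A x)%:E = (c0 b)%:E)%E.
  under eq_integral do rewrite EFinM.
  have i0 : forall x : R, D x -> (0 <= (\1_A x)%:E)%E.
    by move=> x Dx; rewrite lee_fin indicE ler0n.
  have mi : measurable_fun D (fun x => (\1_A x : R)%:E).
    by apply/measurable_EFinP; exact: measurable_indic.
  have c0' : 0 <= c0 b by exact: ltW.
  rewrite ge0_integralZl_EFin //.
  rewrite integral_indic // setIidl; last first.
    move=> x; rewrite /A /D /= !in_itv /= => /andP[h1 _]; lra.
  have mA1 : (@lebesgue_measure R A = 1%:E)%E.
    rewrite /A lebesgue_measure_itv /= lte_fin ltr1n -EFinB.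
    congr EFin; lra.
  rewrite -[RHS]mule1; congr (_ * _)%E; exact: mA1.
have cf := cont_f a b a2.
have cg := cont_g a b a2.
have Dx0 : forall x, D x -> 0 <= x.
  by move=> x; rewrite /D /= in_itv /= andbT.
have mg : measurable_fun D (fun x => (gI a b x)%:E).
  apply/measurable_EFinP; apply: (measurable_funS measurableT) => //.
  exact: continuous_measurable_fun.
have mh : measurable_fun D (fun x => (c0 b * \1_A x)%:E).
  apply/measurable_EFinP; apply: measurable_funM => //.
have mf : measurable_fun D (fun x => (fI a b x)%:E).
  apply/measurable_EFinP; apply: (measurable_funS measurableT) => //.
  exact: continuous_measurable_fun.
have g0 : forall x, D x -> (0 <= (gI a b x)%:E)%E.
  by move=> x Dx; rewrite lee_fin; apply: g_ge0 => //; exact: Dx0.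
have h0 : forall x, D x -> (0 <= (c0 b * \1_A x)%:E)%E.
  by move=> x Dx; rewrite lee_fin mulr_ge0 ?indicE ?ler0n // ltW.
have le : (\int[lebesgue_measure]_(x in D) (gI a b x + c0 b * \1_A x)%:E <=
           \int[lebesgue_measure]_(x in D) (fI a b x)%:E)%E.
  apply: ge0_le_integral => //.
  - by move=> x Dx; rewrite EFinD adde_ge0 //; [exact: g0 | exact: h0].
  - by under eq_fun do rewrite EFinD; apply: emeasurable_funD.
  - by move=> x Dx; rewrite lee_fin; apply: pw => //; exact: Dx0.
apply: (lt_le_trans _ le).
under eq_integral do rewrite EFinD.
rewrite ge0_integralD // Ig Ih -EFinD lte_fin ltrDl //.
Qed.
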